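(* A finite order $P$ has property (itov) if and only if all of the following hold: (1) $P$ has a relatively maximum full trunk $R$; (2) the induced suborder on $\mathrm{Dom}(P)\setminus R$ has property (itov); (3) every element of $\mathrm{Dom}(P)\setminus R$ is regular to $R$; (4) there is no induced suborder of $P$ isomorphic to $O_{obs1}$ or $O_{obs2}$ whose domain meets both $R$ and $\mathrm{Dom}(P)\setminus R$ and has at least two elements in $\mathrm{Dom}(P)\setminus R$.
   Context: Orders are partial orders; $x\sim y$ means $x\ne y$ and $x,y$ incomparable. $O_{obs1}$ is the order on $\{a,b,c,d\}$ whose only comparabilities are $a<b$, $c<d$; $O_{obs2}$ is the order on $\{a,b,c,d\}$ whose only comparabilities are $a<b$, $c<d$, $c<b$. Property (itov): no induced suborder isomorphic to $O_{obs1}$ or $O_{obs2}$. A trunk of $P$ is a subset $T$ such that for pairwise distinct $x,y,z\in T$, $x\sim y$ and $y\sim z$ imply $x\sim z$; $y,z\in T$ lie in the same $T$-level iff $y=z$ or $y\sim z$. A chain is maximum if it has maximum cardinality among chains of $P$; a full trunk is a trunk containing a maximum chain; a relatively maximum full trunk is a full trunk that is the unique inclusion-maximal full trunk. An element $x$ is regular to a trunk $T$ if for all $y,z\in T$ in the same $T$-level: $x<y\iff x<z$, $x>y\iff x>z$, and ($x\sim y$ or $x=y$) $\iff$ ($x\sim z$ or $x=z$). *)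

(* Defs.v *)
(* A finite order P is a finPOrderType T (domain = all of T).
   Induced suborders are handled via subsets A : {set T}. *)
From HB Require Import structures.
From mathcomp Require Import all_boot all_order.
Set Implicit Arguments. Unset Strict Implicit. Unset Printing Implicit Defensive.
Import Order.Theory.
Local Open Scope order_scope.

Section Defs.
Context {disp : Order.disp_t} {T : finPOrderType disp}.

Definition incomp (x y : T) : bool := (x != y) && ~~ (x >=< y).

(* a,b,c,d (pairwise distinct) induce a suborder isomorphic to O_obs1
   via a|->a, b|->b, c|->c, d|->d: only comparabilities a<b, c<d *)
Definition is_obs1 (a b c d : T) : bool :=
  [&& uniq [:: a; b; c; d], a < b, c < d,
      incomp a c, incomp a d, incomp b c & incomp b d].

(* O_obs2: only comparabilities a<b, c<d, c<b *)
Definition is_obs2 (a b c d : T) : bool :=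
  [&& uniq [:: a; b; c; d], a < b, c < d, c < b,
      incomp a c, incomp a d & incomp b d].

Definition obs_set (S : {set T}) : Prop :=
  exists a b c d : T, S = [set a; b; c; d] /\ (is_obs1 a b c d || is_obs2 a b c d).

Definition itov (A : {set T}) : Prop :=
  ~ exists S : {set T}, S \subset A /\ obs_set S.

Definition trunk (R : {set T}) : Prop :=
  forall x y z, x \in R -> y \in R -> z \in R -> x != z ->
    incomp x y -> incomp y z -> incomp x z.

Definition chain (C : {set T}) : Prop :=
  forall x y, x \in C -> y \in C -> x >=< y.

Definition max_chain (C : {set T}) : Prop :=
  chain C /\ forall C', chain C' -> #|C'| <= #|C|.

Definition full_trunk (R : {set T}) : Prop :=
  trunk R /\ exists C, max_chain C /\ C \subset R.

Definition incl_max_full_trunk (R : {set T}) : Prop :=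
  full_trunk R /\ forall R', full_trunk R' -> R \subset R' -> R' = R.

Definition rel_max_full_trunk (R : {set T}) : Prop :=
  incl_max_full_trunk R /\ forall R', incl_max_full_trunk R' -> R' = R.

Definition same_level (y z : T) : bool := (y == z) || incomp y z.

Definition regular (x : T) (R : {set T}) : Prop :=
  forall y z, y \in R -> z \in R -> same_level y z ->
    [/\ (x < y) = (x < z), (y < x) = (z < x)
      & (incomp x y || (x == y)) = (incomp x z || (x == z))].

End Defs.

(* Main.v *)
Require Import Defs.
From mathcomp Require Import all_boot all_order.
From mathcomp Require Import zify.
Set Implicit Arguments. Unset Strict Implicit. Unset Printing Implicit Defensive.
Import Order.Theory.
Local Open Scope order_scope.

Section Aux.
Context {disp : Order.disp_t} {T : finPOrderType disp}.
Implicit Types (a b c d x y z : T) (A B C D U R : {set T}).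

Lemma incompE x y : incomp x y = [&& x != y, ~~ (x < y) & ~~ (y < x)].
Proof.
rewrite /incomp /Order.comparable !le_eqVlt eq_sym.
by case: eqVneq => //= _; rewrite negb_or.
Qed.

Lemma incompC x y : incomp x y = incomp y x.
Proof. by rewrite !incompE eq_sym; case: (_ < _); case: (_ < _); rewrite ?andbF. Qed.

Lemma incomp_lt x y : incomp x y -> (x < y) = false.
Proof. by rewrite incompE => /and3P[_ /negbTE]. Qed.

Lemma incomp_gt x y : incomp x y -> (y < x) = false.
Proof. by rewrite incompE => /and3P[_ _ /negbTE]. Qed.

Lemma incomp_neq x y : incomp x y -> (x == y) = false.
Proof. by rewrite incompE => /and3P[/negbTE]. Qed.

Lemma incompI x y : x != y -> ~~ (x < y) -> ~~ (y < x) -> incomp x y.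
Proof. by move=> *; rewrite incompE; apply/and3P. Qed.

Lemma mk_obs1 a b c d : a < b -> c < d -> incomp a c -> incomp a d ->
  incomp b c -> incomp b d -> is_obs1 a b c d.
Proof.
move=> ab cd ac ad bc bd; rewrite /is_obs1 ab cd ac ad bc bd /= !inE !negb_or.
by rewrite (lt_eqF ab) (lt_eqF cd) !incomp_neq.
Qed.

Lemma mk_obs2 a b c d : a < b -> c < d -> c < b -> incomp a c -> incomp a d ->
  incomp b d -> is_obs2 a b c d.
Proof.
move=> ab cd cb ac ad bd; rewrite /is_obs2 ab cd cb ac ad bd /= !inE !negb_or.
by rewrite (lt_eqF ab) (lt_eqF cd) (gt_eqF cb) !incomp_neq.
Qed.

Lemma itov_obs1 a b c d : itov [set: T] -> is_obs1 a b c d -> False.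
Proof. move=> H o; apply: H; exists [set a; b; c; d]; split; first exact: subsetT.
by exists a, b, c, d; rewrite o. Qed.

Lemma itov_obs2 a b c d : itov [set: T] -> is_obs2 a b c d -> False.
Proof. move=> H o; apply: H; exists [set a; b; c; d]; split; first exact: subsetT.
by exists a, b, c, d; rewrite o orbT. Qed.


Definition chainb C := [forall x in C, [forall y in C, x >=< y]].

Lemma chainP C : reflect (chain C) (chainb C).
Proof.
apply: (iffP forall_inP) => [H x y xC yC | H x xC].
  by move/forall_inP: (H x xC); apply.
by apply/forall_inP => y yC; apply: H.
Qed.

Definition hgt := (\max_(C | chainb C) #|C|)%N.
Definition dnb x C := chainb C && [forall c in C, c < x].
Definition upb x C := chainb C && [forall c in C, x < c].
Definition dd x := (\max_(C | dnb x C) #|C|)%N.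
Definition uu x := (\max_(C | upb x C) #|C|)%N.
Definition Mset := [set x | (dd x + uu x + 1 == hgt)%N].

Lemma chain_le C : chainb C -> (#|C| <= hgt)%N.
Proof. by move=> h; apply: (leq_bigmax_cond (F := fun C : {set T} => #|C|)). Qed.
Lemma dd_le x C : dnb x C -> (#|C| <= dd x)%N.
Proof. by move=> h; apply: (leq_bigmax_cond (F := fun C : {set T} => #|C|)). Qed.
Lemma uu_le x C : upb x C -> (#|C| <= uu x)%N.
Proof. by move=> h; apply: (leq_bigmax_cond (F := fun C : {set T} => #|C|)). Qed.

Lemma bigmax_ex (P : pred {set T}) : P set0 ->
  exists C, P C /\ #|C| = (\max_(C | P C) #|C|)%N.
Proof.
move=> P0; have /(eq_bigmax_cond (fun C : {set T} => #|C|)) [C PC ->] : (0 < #|P|)%N.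
  by apply/card_gt0P; exists set0.
by exists C.
Qed.

Lemma chainb0 : chainb set0.
Proof. by apply/forall_inP => x; rewrite inE. Qed.

Lemma hgt_ex : exists C, chainb C /\ #|C| = hgt.
Proof. exact: (bigmax_ex chainb0). Qed.
Lemma dd_ex x : exists C, dnb x C /\ #|C| = dd x.
Proof. by apply: bigmax_ex; rewrite /dnb chainb0; apply/forall_inP => c; rewrite inE. Qed.
Lemma uu_ex x : exists C, upb x C /\ #|C| = uu x.
Proof. by apply: bigmax_ex; rewrite /upb chainb0; apply/forall_inP => c; rewrite inE. Qed.

Lemma chainU A B : chainb A -> chainb B ->
  (forall a b, a \in A -> b \in B -> a >=< b) -> chainb (A :|: B).
Proof.
move=> /chainP cA /chainP cB H; apply/chainP => a b; rewrite !inE.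
case/orP=> [aA|aB] /orP[bA|bB]; first exact: cA.
- exact: H.
- by rewrite comparable_sym; apply: H.
- exact: cB.
Qed.

Lemma du_le x : (dd x + uu x + 1 <= hgt)%N.
Proof.
have [D [/andP[/chainP cD /forall_inP Dx] <-]] := dd_ex x.
have [U [/andP[/chainP cU /forall_inP Ux] <-]] := uu_ex x.
have DU : D :&: (x |: U) = set0.
  apply/setP => c; rewrite !inE; apply/negP => /andP[/Dx cx /orP[/eqP ce|/Ux xc]].
    by move: cx; rewrite ce ltxx.
  by move: (lt_trans cx xc); rewrite ltxx.
have xU : x \notin U by apply/negP => /Ux; rewrite ltxx.
have E : #|D :|: (x |: U)| = (#|D| + #|U| + 1)%N.
  by move: (cardsUI D (x |: U)); rewrite DU cards0 addn0 cardsU1 xU /=; lia.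
rewrite -E; apply: chain_le; apply: chainU => //.
- by apply/chainP.
- apply: chainU => //; first by apply/forall_inP=> a; rewrite inE => /eqP->; apply/forall_inP=> b; rewrite inE => /eqP->; rewrite comparablexx.
    by apply/chainP.
  by move=> a b; rewrite inE => /eqP-> /Ux /lt_comparable.
- move=> a b /Dx ax; rewrite !inE => /orP[/eqP->|/Ux xb]; first exact: lt_comparable.
  exact: lt_comparable (lt_trans ax xb).
Qed.


Lemma chainb1 x : chainb [set x].
Proof.
by apply/forall_inP=> a; rewrite inE => /eqP->; apply/forall_inP=> b; rewrite inE => /eqP->; rewrite comparablexx.
Qed.

Lemma chain_sub A B : A \subset B -> chainb B -> chainb A.
Proof.
move=> /subsetP AB /chainP cB; apply/chainP => a b aA bA; exact: cB (AB _ aA) (AB _ bA).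
Qed.

Lemma lt_dd x y : x < y -> (dd x < dd y)%N.
Proof.
move=> xy; have [D [/andP[cD /forall_inP Dx] <-]] := dd_ex x.
have xD : x \notin D by apply/negP => /Dx; rewrite ltxx.
have : dnb y (x |: D).
  rewrite /dnb chainU ?chainb1 //=; last first.
    by move=> a b; rewrite inE => /eqP-> /Dx /gt_comparable.
  apply/forall_inP => c; rewrite !inE => /orP[/eqP->//|/Dx cx]; exact: lt_trans cx xy.
by move/dd_le; rewrite cardsU1 xD.
Qed.

Lemma lt_uu x y : x < y -> (uu y < uu x)%N.
Proof.
move=> xy; have [D [/andP[cD /forall_inP Dx] <-]] := uu_ex y.
have xD : y \notin D by apply/negP => /Dx; rewrite ltxx.
have : upb x (y |: D).
  rewrite /upb chainU ?chainb1 //=; last first.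
    by move=> a b; rewrite inE => /eqP-> /Dx /lt_comparable.
  apply/forall_inP => c; rewrite !inE => /orP[/eqP->//|/Dx cx]; exact: lt_trans xy cx.
by move/uu_le; rewrite cardsU1 xD.
Qed.

Lemma maxchain_M C x : chainb C -> #|C| = hgt -> x \in C -> x \in Mset.
Proof.
move=> cC hC xC; set B := [set c in C | c < x]; set A := [set c in C | x < c].
have dB : dnb x B.
  rewrite /dnb (chain_sub _ cC) ?subset_predT //; last by apply/subsetP => c; rewrite inE => /andP[].
  by apply/forall_inP => c; rewrite inE => /andP[].
have uA : upb x A.
  rewrite /upb (chain_sub _ cC) ?subset_predT //; last by apply/subsetP => c; rewrite inE => /andP[].
  by apply/forall_inP => c; rewrite inE => /andP[].
have sub : C \subset B :|: (x |: A).
  apply/subsetP => c cC'; have := (chainP _ cC) c x cC' xC.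
  move=> /comparable_ltgtP[cx|xc|->]; rewrite !inE ?cC' ?cx ?xc ?eqxx ?orbT //.
have c1 := subset_leq_card sub.
have c2 := cardsU B (x |: A).
have c3 : (#|x |: A| <= #|A|.+1)%N by rewrite cardsU1; case: (x \notin A).
have := dd_le dB; have := uu_le uA; have := du_le x.
rewrite inE; move=> h1 h2 h3; apply/eqP; lia.
Qed.


Lemma M_eq x : x \in Mset -> (dd x + uu x + 1 = hgt)%N.
Proof. by rewrite inE => /eqP. Qed.

Lemma M_lt x y : itov [set: T] -> x \in Mset -> y \in Mset -> (dd x < dd y)%N -> x < y.
Proof.
move=> Hi xM yM dxy; case: (boolP (x < y)) => // nxy; exfalso.
have nyx : ~~ (y < x) by apply/negP => /lt_dd; lia.
have ixy : incomp x y.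
  by apply: incompI nxy nyx; apply/negP => /eqP exy; move: dxy; rewrite exy ltnn.
have [D [/andP[cD /forall_inP Dy] hD]] := dd_ex y.
case: (boolP [forall c in D, c < x]) => [allx|/forall_inPn [e eD nex]].
  by have := dd_le (introT andP (conj cD allx)); lia.
have ey := Dy _ eD.
have iex : incomp e x.
  apply: incompI nex _.
    by apply/negP => /eqP exe; move: nxy; rewrite -exe ey.
  by apply/negP => xe; move: nxy; rewrite (lt_trans xe ey).
have [U [/andP[cU /forall_inP Ux] hU]] := uu_ex x.
have := M_eq xM; have := M_eq yM => ey1 ex1.
case: (boolP [forall c in U, y < c]) => [ally|/forall_inPn [c cU' nyc]].
  by have := uu_le (introT andP (conj cU ally)); lia.
have xc := Ux _ cU'.
have icy : incomp c y.
  apply: incompI _ nyc.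
    by apply/negP => /eqP ecy; move: nxy; rewrite -ecy xc.
  by apply/negP => cy; move: nxy; rewrite (lt_trans xc cy).
case: (boolP (e >=< c)) => [/comparable_ltgtP[ec|ce|ece]|iec].
- by apply: (itov_obs2 Hi (a:=x) (b:=c) (c:=e) (d:=y)); apply: mk_obs2 => //; rewrite incompC.
- by move: nxy; rewrite (lt_trans xc (lt_trans ce ey)).
- by move: nxy; rewrite (lt_trans xc) // -ece.
- have iec' : incomp e c.
    by rewrite /incomp iec andbT; apply/negP => /eqP ec; move: iec; rewrite ec comparablexx.
  by apply: (itov_obs1 Hi (a:=e) (b:=y) (c:=x) (d:=c)); apply: mk_obs1 => //; rewrite incompC.
Qed.


Lemma M_same x y : itov [set: T] -> x \in Mset -> y \in Mset -> incomp x y -> dd x = dd y.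
Proof.
move=> Hi xM yM ixy; case: (ltngtP (dd x) (dd y)) => // h.
- by move: (M_lt Hi xM yM h); rewrite (incomp_lt ixy).
- by move: (M_lt Hi yM xM h); rewrite (incomp_gt ixy).
Qed.

Lemma M_trunk : itov [set: T] -> trunk Mset.
Proof.
move=> Hi x y z xM yM zM nxz ixy iyz.
have e1 := M_same Hi xM yM ixy; have e2 := M_same Hi yM zM iyz.
apply: incompI nxz _ _; apply/negP => h.
- by have := lt_dd h; lia.
- by have := lt_dd h; lia.
Qed.

Lemma reg_lt x y z : itov [set: T] -> y \in Mset -> z \in Mset -> incomp y z ->
  x < y -> x < z.
Proof.
move=> Hi yM zM iyz xy; case: (boolP (x < z)) => // nxz; exfalso.
have eyz := M_same Hi yM zM iyz.
have nzx : ~~ (z < x) by apply/negP => zx; move: (incomp_gt iyz); rewrite (lt_trans zx xy).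
have ixz : incomp x z.
  apply: (incompI _ nxz nzx); by apply/negP => /eqP exz; move: (incomp_gt iyz); rewrite -exz xy.
have [D [/andP[cD /forall_inP Dz] hD]] := dd_ex z.
case: (boolP [forall c in D, c < x]) => [allx|/forall_inPn [e eD nex]].
  by have := dd_le (introT andP (conj cD allx)); have := lt_dd xy; lia.
have ez := Dz _ eD.
have ixe : incomp x e.
  apply: incompI _ nex.
    by apply/negP => /eqP exe; move: nxz; rewrite exe ez.
  by apply/negP => xe; move: nxz; rewrite (lt_trans xe ez).
case: (boolP (e < y)) => [ey|ney].
  by apply: (itov_obs2 Hi (a:=x) (b:=y) (c:=e) (d:=z)); apply: mk_obs2.
have iye : incomp y e.
  apply: incompI _ ney.
    by apply/negP => /eqP eye; move: (incomp_lt iyz); rewrite eye ez.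
  by apply/negP => ye; move: (incomp_lt iyz); rewrite (lt_trans ye ez).
by apply: (itov_obs1 Hi (a:=x) (b:=y) (c:=e) (d:=z)); apply: mk_obs1.
Qed.

Lemma reg_gt x y z : itov [set: T] -> y \in Mset -> z \in Mset -> incomp y z ->
  y < x -> z < x.
Proof.
move=> Hi yM zM iyz yx; case: (boolP (z < x)) => // nzx; exfalso.
have eyz := M_same Hi yM zM iyz.
have := M_eq yM; have := M_eq zM => hz hy.
have nxz : ~~ (x < z) by apply/negP => xz; move: (incomp_lt iyz); rewrite (lt_trans yx xz).
have izx : incomp z x.
  apply: (incompI _ nzx nxz); by apply/negP => /eqP ezx; move: (incomp_lt iyz); rewrite ezx yx.
have [D [/andP[cD /forall_inP Dz] hD]] := uu_ex z.
case: (boolP [forall c in D, x < c]) => [allx|/forall_inPn [e eD nex]].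
  by have := uu_le (introT andP (conj cD allx)); have := lt_uu yx; lia.
have ze := Dz _ eD.
have iex : incomp e x.
  apply: incompI _ nex.
    by apply/negP => /eqP exe; move: nzx; rewrite -exe ze.
  by apply/negP => ex; move: nzx; rewrite (lt_trans ze ex).
case: (boolP (y < e)) => [ye|nye].
  apply: (itov_obs2 Hi (a:=z) (b:=e) (c:=y) (d:=x)); apply: mk_obs2 => //.
  by rewrite incompC.
have iye : incomp y e.
  apply: incompI _ nye _.
    by apply/negP => /eqP eye; move: (incomp_gt iyz); rewrite eye ze.
  by apply/negP => ey; move: (incomp_gt iyz); rewrite (lt_trans ze ey).
apply: (itov_obs1 Hi (a:=y) (b:=x) (c:=z) (d:=e)); apply: mk_obs1 => //.
- by rewrite incompC.
- by rewrite incompC.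
Qed.

Lemma M_regular x : itov [set: T] -> x \notin Mset -> regular x Mset.
Proof.
move=> Hi xM y z yM zM /orP[/eqP<-|iyz]; first by split.
have izy : incomp z y by rewrite incompC.
have e1 : (x < y) = (x < z) by apply/idP/idP; [exact: reg_lt yM zM iyz|exact: reg_lt zM yM izy].
have e2 : (y < x) = (z < x) by apply/idP/idP; [exact: reg_gt yM zM iyz|exact: reg_gt zM yM izy].
have nxy : (x == y) = false by apply/negP => /eqP exy; move: xM; rewrite exy yM.
have nxz : (x == z) = false by apply/negP => /eqP exy; move: xM; rewrite exy zM.
by split=> //; rewrite !incompE nxy nxz e1 e2.
Qed.


Lemma max_chainE C : max_chain C -> chainb C /\ #|C| = hgt.
Proof.
case=> /chainP cC H; split=> //; apply/eqP; rewrite eqn_leq chain_le //.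
have [C' [/chainP cC' <-]] := hgt_ex; have := H C' cC'; by rewrite leEnat.
Qed.

Lemma M_full : itov [set: T] -> full_trunk Mset.
Proof.
move=> Hi; split; first exact: M_trunk.
have [C [cC hC]] := hgt_ex; exists C; split.
  split; first exact/chainP.
  by move=> C' /chainP /chain_le; rewrite leEnat hC.
by apply/subsetP => x; apply: maxchain_M.
Qed.

Lemma full_sub R : full_trunk R -> R \subset Mset.
Proof.
case=> tR [C [/max_chainE [chC hC] CR]]; apply/subsetP => z zR.
case: (boolP (z \in C)) => [zC|nzC]; first exact: maxchain_M chC hC zC.
case: (boolP [forall c in C, z >=< c]) => [allc|/forall_inPn [c cC nzc]].
  have : chainb (z |: C).
    apply: chainU => //; first exact: chainb1.
    by move=> a b; rewrite inE => /eqP-> bC; move/forall_inP: allc; apply.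
  by move/chain_le; rewrite cardsU1 nzC hC; lia.
have izc : incomp z c.
  rewrite /incomp nzc andbT; by apply/negP => /eqP ezc; move: nzC; rewrite ezc cC.
have cR : c \in R by apply: (subsetP CR).
have cM := maxchain_M chC hC cC.
have key : forall b, b \in C -> b != c -> (b < c -> b < z) /\ (c < b -> z < b).
  move=> b bC nbc; have bR : b \in R by apply: (subsetP CR).
  have nbz : b != z by apply/negP => /eqP ebz; move: nzC; rewrite -ebz bC.
  have cbz : b >=< z.
    apply: contraT => nbz'; have ibz : incomp b z by rewrite /incomp nbz.
    have := tR _ _ _ bR zR cR nbc ibz izc; rewrite /incomp.
    by rewrite ((chainP _ chC) b c bC cC) andbF.
  split=> h.
  - case/comparable_ltgtP: cbz => // [zb|ebz]; last by move: nbz; rewrite ebz eqxx.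
    by move: (incomp_lt izc); rewrite (lt_trans zb h).
  - case/comparable_ltgtP: cbz => // [bz|ebz]; last by move: nbz; rewrite ebz eqxx.
    by move: (incomp_gt izc); rewrite (lt_trans h bz).
set B := [set b in C | b < c]; set A := [set b in C | c < b].
have dB : dnb z B.
  rewrite /dnb (chain_sub _ chC); last by apply/subsetP => b; rewrite inE => /andP[].
  apply/forall_inP => b; rewrite inE => /andP[bC bc].
  by apply: (key b bC _).1 => //; rewrite (lt_eqF bc).
have uA : upb z A.
  rewrite /upb (chain_sub _ chC); last by apply/subsetP => b; rewrite inE => /andP[].
  apply/forall_inP => b; rewrite inE => /andP[bC cb].
  by apply: (key b bC _).2 => //; rewrite (gt_eqF cb).
have dB' : dnb c B.
  rewrite /dnb (chain_sub _ chC); last by apply/subsetP => b; rewrite inE => /andP[].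
  by apply/forall_inP => b; rewrite inE => /andP[].
have uA' : upb c A.
  rewrite /upb (chain_sub _ chC); last by apply/subsetP => b; rewrite inE => /andP[].
  by apply/forall_inP => b; rewrite inE => /andP[].
have sub : C \subset B :|: (c |: A).
  apply/subsetP => b bC; have := (chainP _ chC) b c bC cC.
  move=> /comparable_ltgtP[bc|cb|->]; rewrite !inE ?bC ?bc ?cb ?eqxx ?orbT //.
have c1 := subset_leq_card sub.
have c2 := cardsU B (c |: A).
have c3 : (#|c |: A| <= #|A|.+1)%N by rewrite cardsU1; case: (c \notin A).
have := dd_le dB; have := uu_le uA; have := du_le z.
rewrite inE; move=> h1 h2 h3; apply/eqP; move: h1 h2 h3 c1 c2 c3 hC; clear; lia.
Qed.

Lemma M_relmax : itov [set: T] -> rel_max_full_trunk Mset.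
Proof.
move=> Hi; have iM : incl_max_full_trunk Mset.
  split; first exact: M_full.
  by move=> R' fR' sub; apply/eqP; rewrite eqEsubset full_sub.
split=> // R' [fR' mR']; apply/esym; exact: mR' (M_full Hi) (full_sub fR').
Qed.


Lemma two_out R S x y : itov (~: R) ->
  ~ (exists S : {set T}, [/\ obs_set S, S :&: R != set0 & (1 < #|S :\: R|)%N]) ->
  obs_set S -> x \in S -> y \in S -> x != y -> x \notin R -> y \notin R -> False.
Proof.
move=> H2 H4 oS xS yS nxy xR yR.
case: (boolP (S :&: R == set0)) => [/eqP SR|SR].
  apply: H2; exists S; split=> //; apply/subsetP => u uS; rewrite inE.
  apply/negP => uR; move: SR => /setP /(_ u); by rewrite !inE uS uR.
apply: H4; exists S; split=> //.
have : [set x; y] \subset S :\: R by apply/subsetP => u; rewrite !inE => /orP[]/eqP->; rewrite ?xS ?yS ?xR ?yR.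
by move/subset_leq_card; rewrite cards2 nxy.
Qed.

End Aux.

Theorem theorem5 (disp : Order.disp_t) (T : finPOrderType disp) :
  itov [set: T] <->
  exists R : {set T},
    [/\ rel_max_full_trunk R,
        itov (~: R),
        (forall x, x \in ~: R -> regular x R)
      & ~ (exists S : {set T},
             [/\ obs_set S, S :&: R != set0 & (1 < #|S :\: R|)%N])].
Proof.
split=> [Hi|[R [[[[tR _] _] _] H2 H3 H4]]].
  exists Mset; split.
  - exact: M_relmax.
  - by move=> [S [_ oS]]; apply: Hi; exists S; split=> //; apply: subsetT.
  - by move=> x; rewrite inE; apply: M_regular.
  - by move=> [S [oS _ _]]; apply: Hi; exists S; split=> //; apply: subsetT.
move=> [S [_ oS]]; have oS' := oS.
case: oS' => [a [b [c [d [SE o]]]]].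
have mem : forall u, u \in [:: a; b; c; d] -> u \in S.
  by move=> u; rewrite SE !inE -!orbA => /or4P[]/eqP->; rewrite !eqxx ?orbT.
have TO : forall x y, x \in [:: a; b; c; d] -> y \in [:: a; b; c; d] -> x != y ->
    x \notin R -> y \notin R -> False.
  by move=> x y xS yS; apply: (two_out H2 H4 oS (mem _ xS) (mem _ yS)).
have INR : forall x y, x \in [:: a; b; c; d] -> y \in [:: a; b; c; d] -> x != y ->
    x \notin R -> y \in R.
  by move=> x y xS yS nxy xR; apply/negPn/negP => yR; exact: (TO _ _ xS yS nxy xR yR).
have inS : [&& a \in [:: a; b; c; d], b \in [:: a; b; c; d],
           c \in [:: a; b; c; d] & d \in [:: a; b; c; d]].
  by rewrite !inE !eqxx !orbT.
case/and4P: inS => aS bS cS dS.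
have REG : forall x y z, x \notin R -> y \in R -> z \in R -> incomp y z ->
    [/\ (x < y) = (x < z), (y < x) = (z < x)
      & (incomp x y || (x == y)) = (incomp x z || (x == z))].
  by move=> x y z xR yR zR iyz; apply: H3; rewrite ?inE // /same_level iyz orbT.
rewrite /is_obs1 /is_obs2 in o.
case/orP: o => /and5P[u ab cd].
- move=> ac /and3P[ad bc bd].
  move: u; rewrite /= !inE !negb_or => /and4P[/and3P[nab nac nad] /andP[nbc nbd] ncd _].
  case: (boolP (a \in R)) => aR.
    case: (boolP (b \in R)) => bR.
      case: (boolP (c \in R)) => cR.
        case: (boolP (d \in R)) => dR.
          have := tR _ _ _ aR cR bR nab ac; rewrite incompC bc => /(_ isT).
          by rewrite incompE ab => /and3P[].
        have [] := REG d c a dR cR aR; first by rewrite incompC.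
        by rewrite cd (incomp_lt ad).
      have [] := REG c d a cR (INR _ _ cS dS ncd cR) aR; first by rewrite incompC.
      by rewrite cd (incomp_gt ac).
    have [] := REG b a c bR aR (INR _ _ bS cS nbc bR) ac.
    by rewrite ab (incomp_gt bc).
  have [] := REG a b c aR (INR _ _ aS bS nab aR) (INR _ _ aS cS nac aR) bc.
  by rewrite ab (incomp_lt ac).
- move=> cb /and3P[ac ad bd].
  move: u; rewrite /= !inE !negb_or => /and4P[/and3P[nab nac nad] /andP[nbc nbd] ncd _].
  case: (boolP (a \in R)) => aR.
    case: (boolP (b \in R)) => bR.
      case: (boolP (c \in R)) => cR.
        case: (boolP (d \in R)) => dR.
          have := tR _ _ _ dR aR cR; rewrite eq_sym ncd incompC ad => /(_ isT isT ac).
          by rewrite incompE cd => /and3P[].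
        have [] := REG d a c dR aR cR ac.
        by rewrite cd (incomp_lt ad).
      have [] := REG c a d cR aR (INR _ _ cS dS ncd cR) ad.
      by rewrite cd (incomp_gt ac).
    have [] := REG b a d bR aR (INR _ _ bS dS nbd bR) ad.
    by rewrite ab (incomp_gt bd).
  have [] := REG a b d aR (INR _ _ aS bS nab aR) (INR _ _ aS dS nad aR) bd.
  by rewrite ab (incomp_lt ad).
Qed.
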